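(* Let $P^A,P^B,S$ be pairwise disjoint infinite sets of positive integers, each with a fixed enumeration, and for real $x\ge0$ let $P^c_x$ (resp. $S_x$) denote the first $\lfloor x\rfloor$ elements of $P^c$ (resp. $S$). For $c\in\{A,B\}$ and integers $0<k\le t$ define $F^c_{t,k}=P^c_{t/2+1}\cup(S_{t/2}\setminus S_{t-k})$. Then $\{F^c_{t,k}\}$ is an F-system, and for every positive integer $t$, $\left|\bigcup_{c\in\{A,B\}}\bigcup_{0<\kappa\le\tau\le t}F^c_{\tau,\kappa}\right|\le 1.5\,t+2$; in particular it is a $1.5$-competitive F-system.
   Context: F-system: a family $\mathcal F=\{F^c_{t,k}\}$ of sets of positive integers, indexed by $c\in\{A,B\}$ and integers $0<k\le t$, such that (F1) $|F^c_{t,k}|\ge k$ for all $c,t,k$; and (F2) $F^A_{t,k}\cap F^B_{t',k'}=\emptyset$ for all $k\le t$, $k'\le t'$ with $k+k'\le\max(t,t')$. An F-system is $R$-competitive if there is a constant $\lambda$ (independent of $t$) such that for every positive integer $t$, $\left|\bigcup_{c\in\{A,B\}}\bigcup_{0<\kappa\le\tau\le t}F^c_{\tau,\kappa}\right|\le Rt+\lambda$. *)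

(* Defs.v *)
From HB Require Import structures.
From mathcomp Require Import all_boot all_order all_algebra.
Set Implicit Arguments. Unset Strict Implicit. Unset Printing Implicit Defensive.
Import Order.TTheory GRing.Theory Num.Theory.

Inductive color := cA | cB.

(* A finite set of positive integers is represented by a list (duplicates
   allowed); its cardinality is the number of distinct entries. *)
Definition card_seq (s : seq nat) : nat := size (undup s).

Definition Fsystem (F : color -> nat -> nat -> seq nat) : Prop :=
  (forall c t k, 0 < k <= t -> all (fun x => 0 < x) (F c t k)) /\
  (forall c t k, 0 < k <= t -> k <= card_seq (F c t k)) /\
  (forall t k t' k', 0 < k <= t -> 0 < k' <= t' -> k + k' <= maxn t t' ->
     forall x, x \in F cA t k -> x \notin F cB t' k').

Definition Funion (F : color -> nat -> nat -> seq nat) (t : nat) : seq nat :=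
  flatten (flatten [seq [seq F c tau kap | kap <- iota 1 tau]
                   | c <- [:: cA; cB], tau <- iota 1 t]).

Definition competitive (F : color -> nat -> nat -> seq nat) (R : rat) : Prop :=
  exists lambda : rat, forall t, 0 < t ->
    ((card_seq (Funion F t))%:R <= R * t%:R + lambda)%R.

(* Enumerations of infinite sets of positive integers: injective maps
   nat -> nat with positive values; element i is the (i+1)-th element. *)
Definition enumeration (p : nat -> nat) : Prop :=
  injective p /\ (forall i, 0 < p i).

Definition firstn (p : nat -> nat) (n : nat) : seq nat := [seq p i | i <- iota 0 n].

(* F^c_{t,k} = P^c_{t/2+1} u (S_{t/2} \ S_{t-k});  floor(t/2+1) = t./2 + 1. *)
Definition Fconstr (pA pB s : nat -> nat) (c : color) (t k : nat) : seq nat :=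
  firstn (if c is cA then pA else pB) (t./2 + 1) ++
  [seq x <- firstn s t./2 | x \notin firstn s (t - k)].

(* Main.v *)
Require Import Defs.
From HB Require Import structures.
From mathcomp Require Import all_boot all_order all_algebra.
From Stdlib Require Import Lia.
Import Order.TTheory GRing.Theory Num.Theory.

Ltac slia := repeat match goal with H : is_true (_ <= _) |- _ => move/ssrnat.leP: H => H end;
  try (apply/ssrnat.leP);
  repeat match goal with H : context[addn] |- _ => rewrite -plusE in H
   | H : context[subn] |- _ => rewrite -minusE in H
   | H : context[muln] |- _ => rewrite -multE in H end;
  rewrite -?plusE -?minusE -?multE; lia.

Lemma dummy_ : True. Proof. exact I. Qed.

Lemma firstnP p n x : reflect (exists2 i, i < n & x = p i) (x \in firstn p n).
Proof.
apply: (iffP mapP) => [[i] | [i Hi ->]].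
  by rewrite mem_iota add0n => /andP [_ Hi] ->; exists i.
by exists i; rewrite // mem_iota add0n Hi.
Qed.

Lemma memF pA pB s c t k x : injective s ->
  x \in Fconstr pA pB s c t k ->
  (exists2 i, i <= t./2 & x = (if c is cA then pA else pB) i) \/
  (exists j, [/\ t - k <= j, j < t./2 & x = s j]).
Proof.
move=> Is; rewrite mem_cat => /orP [/firstnP [i Hi ->] | ].
  by left; exists i => //; move: Hi; rewrite addn1 ltnS.
rewrite mem_filter => /andP [Hn /firstnP [j Hj Ex]].
right; exists j; split => //.
rewrite leqNgt; apply/negP => Hl; move/negP: Hn; apply.
by apply/firstnP; exists j.
Qed.

Arguments memF {pA pB s c t k x}.

Lemma memFunion F t x : x \in Funion F t ->
  exists c tau kap, [/\ 0 < kap, kap <= tau, tau <= t & x \in F c tau kap].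
Proof.
rewrite /Funion => /flattenP [l /flattenP [L]].
rewrite /= cats0 mem_cat => /orP H.
have [c [tau [Ht ->]]] : exists c tau, tau \in iota 1 t /\
   L = [seq F c tau kap | kap <- iota 1 tau].
  by case: H => /mapP [tau Ht ->]; [exists cA | exists cB]; exists tau.
move=> /mapP [kap Hk ->] Hx.
move: Ht Hk; rewrite !mem_iota => /andP [H1 H2] /andP [H3 H4].
exists c, tau, kap; split => //; slia.
Qed.

Theorem mainTheorem3 (pA pB s : nat -> nat) :
  enumeration pA -> enumeration pB -> enumeration s ->
  (forall i j, pA i <> pB j) -> (forall i j, pA i <> s j) ->
  (forall i j, pB i <> s j) ->
  Fsystem (Fconstr pA pB s) /\
  (forall t, 0 < t ->
     ((card_seq (Funion (Fconstr pA pB s) t))%:R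
        <= (3%:R / 2%:R) * t%:R + 2%:R :> rat)%R) /\
  competitive (Fconstr pA pB s) (3%:R / 2%:R).
Proof.
move=> [IA PA] [IB PB] [Is Ps] dAB dAs dBs.
have bound : forall t, card_seq (Funion (Fconstr pA pB s) t) <= 3 * t./2 + 2.
  move=> t.
  pose L := firstn pA (t./2 + 1) ++ firstn pB (t./2 + 1) ++ firstn s t./2.
  have : card_seq (Funion (Fconstr pA pB s) t) <= size L.
    apply: uniq_leq_size; first exact: undup_uniq.
    move=> x; rewrite mem_undup => /memFunion [c [tau [kap [H1 H2 H3 Hx]]]].
    have Ht2 : tau./2 <= t./2 by apply: half_leq.
    case: (memF Is Hx) => [[i Hi ->] | [j [_ Hj ->]]].
      rewrite !mem_cat; case: c {Hx} Hi => Hi; apply/orP.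
        by left; apply/firstnP; exists i => //; slia.
      by right; apply/orP; left; apply/firstnP; exists i => //; slia.
    rewrite !mem_cat; apply/orP; right; apply/orP; right.
    by apply/firstnP; exists j => //; slia.
  rewrite /L !size_cat !size_map !size_iota => H; slia.
have rbound : forall t, ((card_seq (Funion (Fconstr pA pB s) t))%:R
        <= (3%:R / 2%:R) * t%:R + 2%:R :> rat)%R.
  move=> t.
  have H2 : (3 * t./2 + 2) * 2 <= 3 * t + 4.
    have := odd_double_half t; rewrite -addnn.
    case: (odd t) => /= E; slia.
  apply: (le_trans (y := ((3 * t./2 + 2)%N%:R)%R)); first by rewrite ler_nat.
  have -> : ((3%:R / 2%:R) * t%:R + 2%:R = (3 * t + 4)%N%:R / 2%:R :> rat)%R.
    rewrite [in RHS]natrD [in RHS]natrM [RHS]mulrDl mulrAC; congr (_ + _)%R.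
  by rewrite ler_pdivlMr ?ltr0n // -natrM ler_nat.
split; last split.
- split; [|split].
  + move=> c t k _; apply/allP => x /(memF Is) [[i _ ->] | [j [_ _ ->]]] //.
    by case: c.
  + move=> c t k /andP [Hk Hkt].
    have Ipc : injective (if c is cA then pA else pB) by case: c.
    have Dpc : forall i j, (if c is cA then pA else pB) i <> s j by clear Ipc; case: c.
    pose pc := if c is cA then pA else pB.
    pose L' := firstn pc (t./2 + 1) ++ [seq s j | j <- iota (t - k) (t./2 - (t - k))].
    apply: (@leq_trans (size L')).
      rewrite /L' size_cat !size_map !size_iota.
      have := odd_double_half t; rewrite -addnn.
      case: (odd t) => /= E; slia.
    rewrite /card_seq; apply: uniq_leq_size.
      rewrite cat_uniq !map_inj_uniq ?iota_uniq //= andbT.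
      apply/hasPn => x /mapP [j _ ->]; apply/negP => /firstnP [i _ E].
      exact: (Dpc i j).
    move=> x; rewrite mem_undup /Fconstr -/pc !mem_cat => /orP [->//|].
    move=> /mapP [j]; rewrite mem_iota => /andP [J1 J2] ->.
    apply/orP; right; rewrite mem_filter; apply/andP; split.
      apply/negP => /firstnP [i Hi E]; move: (Is _ _ E) => Eij; subst; slia.
    apply/firstnP; exists j => //; slia.
  + move=> t k t' k' /andP [Hk Hkt] /andP [Hk' Hkt'] Hm x HA; apply/negP => HB.
    case: (memF Is HA) => [[i _ E0] | [j [J1 J2 Ex]]];
    case: (memF Is HB) => [[i' _ E] | [j' [J1' J2' Ex']]].
    * by apply: (dAB i i'); rewrite -E0 -E.
    * by apply: (dAs i j'); rewrite -E0 -Ex'.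
    * by apply: (dBs i' j); rewrite -E -Ex.
    * rewrite Ex in Ex'; move: (Is _ _ Ex') => Ej; subst j'.
      have ht : t./2 + t./2 <= t by rewrite -{3}(odd_double_half t) -addnn leq_addl.
      have ht' : t'./2 + t'./2 <= t' by rewrite -{3}(odd_double_half t') -addnn leq_addl.
      move: Hm; rewrite leq_max => /orP Hm.
      move/ssrnat.leP: J1; move/ssrnat.leP: J2; move/ssrnat.leP: J1'; move/ssrnat.leP: J2'.
      move/ssrnat.leP: ht; move/ssrnat.leP: ht'.
      case: Hm => /ssrnat.leP; rewrite -!plusE -!minusE; lia.
- by move=> t _; apply: rbound.
- by exists 2%:R%R => t _; apply: rbound.
Qed.
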